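(* Let $p$ be an odd prime and $t$ a positive integer, and let $n$ be a positive integer dividing $p^t+1$ such that $\frac{p^t+1}{n}$ is odd. Let $\eta$ be a root of an irreducible quadratic polynomial over $\mathbb{F}_p$. Let $S\subseteq\mathbb{F}_p^n\times\mathbb{F}_p^n$ be a totally isotropic, simultaneously negacyclic subspace whose image under $(\mathbf{a},\mathbf{b})\mapsto\mathbf{a}+\eta\mathbf{b}$ is an ideal of $\mathbb{F}_p(\eta)[X]/\langle X^n+1\rangle$. Let $g(X)$ be the monic generator (dividing $X^n+1$) of the ideal $F=\{\mathbf{a}:(\mathbf{a},\mathbf{b})\in S\}$ of $\mathcal{R}=\mathbb{F}_p[X]/\langle X^n+1\rangle$. If $g(-X)=g(X)$, then $S$ is uniquely negacyclic.
   Context: Vectors $(a_0,\dots,a_{n-1})$ over a field are identified with polynomials $\sum a_iX^i$ modulo $X^n+1$. $N:\mathbb{F}_p^n\to\mathbb{F}_p^n$ is $(u_0,\dots,u_{n-1})\mapsto(-u_{n-1},u_0,\dots,u_{n-2})$; $S$ is simultaneously negacyclic if $(\mathbf{a},\mathbf{b})\in S$ implies $(N\mathbf{a},N\mathbf{b})\in S$. The symplectic inner product is $\langle(\mathbf{a},\mathbf{b}),(\mathbf{c},\mathbf{d})\rangle_s=\mathbf{a}^T\mathbf{d}-\mathbf{b}^T\mathbf{c}$ and $S$ is totally isotropic if it vanishes on $S\times S$. $S$ is uniquely negacyclic if there is a unique $f\in\mathcal{R}$ with $(g,f)\in S$. *)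

(* Defs.v *)
From HB Require Import structures.
From mathcomp Require Import all_boot all_order all_algebra all_field.
Set Implicit Arguments. Unset Strict Implicit. Unset Printing Implicit Defensive.
Import Order.TTheory GRing.Theory Num.Theory.
Local Open Scope ring_scope.

Section Negacyclic.
Variable R : fieldType.
Variable n : nat.

Definition vget (v : 'rV[R]_n) (k : nat) : R :=
  if insub k is Some i then v 0 i else 0.

Definition vpoly (v : 'rV[R]_n) : {poly R} := \poly_(i < n) vget v i.

Definition pvec (f : {poly R}) : 'rV[R]_n :=
  \row_(i < n) (f %% ('X^n + 1))`_i.

Definition negashift (v : 'rV[R]_n) : 'rV[R]_n :=
  \row_(i < n) (if (i : nat) == 0%N then - vget v n.-1 else vget v i.-1).

Definition is_subspace (S : 'rV[R]_n * 'rV[R]_n -> Prop) : Prop :=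
  [/\ S (0, 0),
      (forall u v, S u -> S v -> S (u.1 + v.1, u.2 + v.2)) &
      (forall (c : R) u, S u -> S (c *: u.1, c *: u.2))].

Definition simult_negacyclic (S : 'rV[R]_n * 'rV[R]_n -> Prop) : Prop :=
  forall a b, S (a, b) -> S (negashift a, negashift b).

Definition dotv (u v : 'rV[R]_n) : R := \sum_(i < n) u 0 i * v 0 i.

Definition symp (x y : 'rV[R]_n * 'rV[R]_n) : R :=
  dotv x.1 y.2 - dotv x.2 y.1.

Definition totally_isotropic (S : 'rV[R]_n * 'rV[R]_n -> Prop) : Prop :=
  forall x y, S x -> S y -> symp x y = 0.

(* I is an ideal of K[X]/<X^n+1> (vectors identified with polynomials),
   where K is the subfield of R described by the predicate C of admissible
   multiplier polynomials *)
Definition is_nc_ideal (C : {poly R} -> Prop) (I : 'rV[R]_n -> Prop) : Prop :=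
  [/\ I 0,
      (forall u v, I u -> I v -> I (u + v)) &
      (forall h v, C h -> I v -> I (pvec (h * vpoly v)))].

Definition uniquely_negacyclic (S : 'rV[R]_n * 'rV[R]_n -> Prop)
  (g : {poly R}) : Prop :=
  exists! f : 'rV[R]_n, S (pvec g, f).

End Negacyclic.

(* Main.v *)
Require Import Defs.
From HB Require Import structures.
From mathcomp Require Import all_boot all_order all_algebra all_field ring zify.
Import GRing.Theory.
Set Implicit Arguments. Unset Strict Implicit.
Local Open Scope ring_scope.

Section Gen.
Variable K : fieldType.
Variable n : nat.
Hypothesis hn : (0 < n)%N.
Local Notation u := ('X^n + 1 : {poly K}).
Implicit Types f : {poly K}.

Lemma size_u : size u = n.+1.
Proof. by rewrite -polyC1 size_XnaddC. Qed.

Lemma u_neq0 : u != 0.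
Proof. by rewrite -size_poly_eq0 size_u. Qed.

Lemma vgetE (v : 'rV[K]_n) (i : 'I_n) : vget v i = v 0 i.
Proof.
rewrite /vget; case: insubP => [j _ hj|]; last by rewrite ltn_ord.
by have -> : j = i by apply: val_inj.
Qed.

Lemma vget_out (v : 'rV[K]_n) i : (n <= i)%N -> vget v i = 0.
Proof. by move=> h; rewrite /vget insubF // ltnNge h. Qed.

Lemma size_vpoly (v : 'rV[K]_n) : (size (vpoly v) <= n)%N.
Proof. exact: size_poly. Qed.

Lemma size_modu f : (size (f %% u)%R <= n)%N.
Proof. by rewrite -ltnS -size_u ltn_modp u_neq0. Qed.

Lemma vpoly_pvec f : vpoly (pvec n f) = f %% u.
Proof.
apply/polyP => i; rewrite coef_poly.
case: ltnP => hi.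
  by rewrite (vgetE _ (Ordinal hi)) mxE.
by rewrite nth_default // (leq_trans (size_modu f)).
Qed.

Lemma pvec_vpoly (v : 'rV[K]_n) : pvec n (vpoly v) = v.
Proof.
apply/rowP => i; rewrite mxE modp_small; last by rewrite size_u ltnS size_vpoly.
by rewrite coef_poly ltn_ord vgetE.
Qed.

Lemma pvec0 : pvec n 0 = 0 :> 'rV[K]_n.
Proof. by apply/rowP => i; rewrite !mxE mod0p coef0. Qed.

Lemma vpolyZ c (v : 'rV[K]_n) : vpoly (c *: v) = c *: vpoly v.
Proof.
apply/polyP => i; rewrite coefZ !coef_poly; case: ltnP => hi; last by rewrite mulr0.
by rewrite !(vgetE _ (Ordinal hi)) mxE.
Qed.

Lemma pvecZ c f : pvec n (c *: f) = c *: pvec n f.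
Proof. by apply/rowP => i; rewrite !mxE modpZl coefZ. Qed.

Lemma dvdu_modB f : u %| f %% u - f.
Proof.
by rewrite {2}(divp_eq f u) opprD addrCA addrN addr0 -mulNr dvdp_mull.
Qed.


Lemma modu_coef (P : {poly K}) j : (size P <= n + n)%N -> (j < n)%N ->
  (P %% u)`_j = P`_j - P`_(j + n).
Proof.
move=> hP hj.
have e : P = drop_poly n P * u + (take_poly n P - drop_poly n P).
  by rewrite -{1}(poly_take_drop n P); ring.
rewrite {1}e modp_addl_mul_small; last first.
  rewrite size_u ltnS (leq_trans (size_polyD _ _)) // geq_max size_take_poly.
  by rewrite size_polyN size_drop_poly leq_subLR.
by rewrite coefB coef_take_poly hj coef_drop_poly.
Qed.

Lemma dvdu_coef w : (forall k, (k < n)%N -> (('X^k * w) %% u)`_n.-1 = 0) ->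
  u %| w.
Proof.
move=> h; apply/modp_eq0P; apply/polyP => j; rewrite coef0.
case: (ltnP j n) => hj; last by rewrite nth_default // (leq_trans (size_modu w)).
have hk : (n.-1 - j < n)%N by rewrite ltn_subLR ?prednK // ?addnS ?ltnS ?leq_addl // -ltnS prednK.
have := h _ hk.
rewrite -modp_mul modu_coef; first last.
- by rewrite prednK.
- rewrite (leq_trans (size_mul_leq _ _)) // size_polyXn (leq_trans _ (leq_add hk (size_modu w))) //.
rewrite !coefXnM.
have -> : (n.-1 < n.-1 - j)%N = false by rewrite ltnNge leq_subr.
have -> : (n.-1 + n < n.-1 - j)%N = false by rewrite ltnNge (leq_trans (leq_subr _ _) (leq_addr _ _)).
rewrite [_`_(n.-1 + n - _)]nth_default; last by rewrite (leq_trans (size_modu w)) //; lia.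
have -> : (n.-1 - (n.-1 - j) = j)%N by lia.
by rewrite subr0.
Qed.


Definition revp (d : 'rV[K]_n) : {poly K} := \sum_(i < n) vget d i *: 'X^((n.-1 - i)%N).

Lemma revp_coef (d : 'rV[K]_n) (j : 'I_n) : (revp d)`_(n.-1 - j) = vget d j.
Proof.
rewrite /revp coef_sumMXn (big_pred1 j) // => i /=.
apply/eqP/eqP => [h|->] //; apply: val_inj => /=.
have := ltn_ord i; have := ltn_ord j; lia.
Qed.

Lemma size_revp (d : 'rV[K]_n) : (size (revp d) <= n)%N.
Proof.
rewrite /revp; apply: (big_ind (fun x : {poly K} => size x <= n)%N) => //.
- by rewrite size_poly0.
- by move=> x y hx hy; rewrite (leq_trans (size_polyD _ _)) // geq_max hx hy.
move=> i _; rewrite (leq_trans (size_scale_leq _ _)) // size_polyXn; lia.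
Qed.

Lemma nataux a b m : (0 < m)%N -> (a <= m)%N -> (b <= m)%N -> ((a + b).-1 <= m.-1 + m)%N.
Proof. lia. Qed.

Lemma dot_poly (d : 'rV[K]_n) f :
  dotv (pvec n f) d = ((f * revp d) %% u)`_n.-1.
Proof.
rewrite mulrC -modp_mul mulrC modu_coef; first last.
- by rewrite prednK.
- by rewrite (leq_trans (size_mul_leq _ _)) // (leq_trans (leq_pred _)) // leq_add ?size_modu ?size_revp.
rewrite [_`_(n.-1 + n)]nth_default; last first.
  by rewrite (leq_trans (size_mul_leq _ _)) // nataux ?size_modu ?size_revp.
rewrite subr0 coefM -(big_mkord xpredT (fun j => (f %% u)`_j * (revp d)`_(n.-1 - j))).
rewrite prednK // big_mkord /dotv; apply: eq_bigr => j _.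
by rewrite revp_coef vgetE mxE.
Qed.


Lemma term_cong i : (i <= n.-1)%N ->
  u %| 'X^((n.-1 - i)%N) - 'X^(n.-1) * (- 'X^(n.-1)) ^+ i.
Proof.
move=> hi.
have e1 : 'X^(n.-1) * (- 'X^(n.-1)) ^+ i = 'X^((n.-1 - i)%N) * (- 'X^n) ^+ i :> {poly K}.
  rewrite -{1}(subnK hi) exprD -mulrA -exprMn mulrN -exprS prednK //.
rewrite e1 -{1}(mulr1 'X^((n.-1 - i)%N)) -mulrBr dvdp_mull //.
rewrite -opprB dvdpNr.
have -> : (- 'X^n) ^+ i - 1 = (- 'X^n) ^+ i - 1 ^+ i :> {poly K} by rewrite expr1n.
by rewrite subrXX -opprD dvdp_mulr // dvdpNr.
Qed.

Lemma rev_cong (d : 'rV[K]_n) :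
  u %| revp d - 'X^(n.-1) * (vpoly d \Po (- 'X^(n.-1))).
Proof.
rewrite /revp /vpoly poly_def raddf_sum mulr_sumr -sumrB.
apply: (big_ind (fun x => u %| x)) => //; first by move=> x y; apply: dvdp_add.
move=> i _ /=; rewrite comp_polyZ rmorphXn /= comp_polyX.
rewrite -scalerAr -scalerBr -mul_polyC dvdp_mull // term_cong //.
by rewrite -ltnS prednK.
Qed.

Lemma comp_cong (f w a b : {poly K}) : w %| a - b -> w %| (f \Po a) - (f \Po b).
Proof.
move=> hab; rewrite (comp_polyE f a) (comp_polyE f b) -sumrB.
apply: (big_ind (fun x => w %| x)) => //; first by move=> x y; apply: dvdp_add.
move=> i _; rewrite -scalerBr -mul_polyC dvdp_mull // subrXX.
exact: dvdp_mulr.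
Qed.


Lemma sep_u : (n%:R != 0 :> K) -> separable_poly u.
Proof.
move=> hn0; rewrite unlock.
have -> : u^`() = n%:R *: 'X^(n.-1).
  by rewrite derivD derivXn -polyC1 derivC addr0 scaler_nat.
rewrite coprimepZr // coprimep_expr // coprimepX rootE !hornerE expr0n.
by rewrite eqn0Ngt hn add0r oner_eq0.
Qed.

Lemma reduced2 x : separable_poly u -> u %| x ^+ 2 -> u %| x.
Proof.
move=> hs hx.
set dd := gcdp u x.
have dd0 : dd != 0 by rewrite gcdp_eq0 negb_and u_neq0.
set e := u %/ dd; set y := x %/ dd.
have ue : u = e * dd by rewrite divpK // dvdp_gcdl.
have xe : x = y * dd by rewrite divpK // dvdp_gcdr.
have cop : coprimep e y by apply: coprimep_div_gcd; rewrite u_neq0.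
have hed : e %| dd.
  have : e * dd %| (y ^+ 2 * dd) * dd by rewrite -ue -mulrA -expr2 -exprMn -xe.
  by rewrite dvdp_mul2r // Gauss_dvdpr // coprimep_expr.
have he : size e = 1%N.
  apply/eqP; apply: contraT => hne.
  have e0 : e != 0 by apply: contraNneq u_neq0 => e0; rewrite ue e0 mul0r.
  have := separable_nosquare (k := 2) hs (erefl _) hne.
  by move=> <-; rewrite {1}ue expr2 dvdp_mul2l.
have /size1_polyC ec : (size e <= 1)%N by rewrite he.
have c0 : e`_0 != 0.
  by apply/eqP => h; move: he; rewrite ec h polyC0 size_poly0.
rewrite ue ec mul_polyC dvdpZl //.
exact: dvdp_gcdr.
Qed.

Lemma reducedk x k : separable_poly u -> u %| x ^+ k.+1 -> u %| x.
Proof.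
move=> hs; elim: k => [|k IH]; first by rewrite expr1.
move=> h; apply: IH; apply: reduced2 => //.
have -> : (x ^+ k.+1) ^+ 2 = x ^+ k.+2 * x ^+ k by rewrite -exprM -exprD; congr (_ ^+ _); lia.
exact: dvdp_mulr.
Qed.


Lemma u_negX : ~~ odd n -> u \Po (- 'X) = u.
Proof.
move=> he; rewrite comp_polyD -polyC1 comp_polyC rmorphXn /= comp_polyX exprNn.
by rewrite -signr_odd (negbTE he) expr0 mul1r.
Qed.

Lemma dvdu_negX a : ~~ odd n -> u %| a -> u %| a \Po (- 'X).
Proof. by move=> he /dvdpP [k ->]; rewrite comp_polyM u_negX // dvdp_mull. Qed.

Lemma negX_inv (a : {poly K}) : (a \Po (- 'X)) \Po (- 'X) = a.
Proof. by rewrite -comp_polyA raddfN /= comp_polyX opprK comp_polyXr. Qed.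

End Gen.

Section Fp.
Variable p : nat.
Hypothesis hp : prime p.

Lemma coef_frob t (c : 'F_p) : c ^+ (p ^ t)%N = c.
Proof.
elim: t => [|t IH]; first by rewrite expn0 expr1.
by rewrite expnSr exprM IH; have := expf_card c; rewrite card_Fp.
Qed.

Lemma frob t (f : {poly 'F_p}) : f ^+ (p ^ t)%N = f \Po 'X^(p ^ t)%N.
Proof.
have hpc : p \in [pchar {poly 'F_p}] by rewrite pchar_poly pchar_Fp.
have hc : [pchar {poly 'F_p}].-nat (p ^ t)%N.
  by rewrite (eq_pnat _ (pcharf_eq hpc)) pnatX pnat_id.
elim/poly_ind: f => [|q c IH].
  by rewrite comp_poly0 expr0n expn_eq0 eqn0Ngt prime_gt0.
rewrite exprDn_pchar // exprMn IH -rmorphXn coef_frob.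
by rewrite comp_polyD comp_polyM comp_polyX comp_polyC.
Qed.

End Fp.

Theorem mainTheorem7
  (p t n : nat) (hp : prime p) (hpodd : odd p) (ht : (0 < t)%N)
  (hn : (0 < n)%N) (hdvd : (n %| p ^ t + 1)%N) (hq : odd ((p ^ t + 1) %/ n))
  (L : fieldExtType 'F_p) (eta : L) (q : {poly 'F_p})
  (hqsz : size q = 3%N) (hqirr : irreducible_poly q)
  (heta : root (map_poly (in_alg L) q) eta)
  (S : 'rV['F_p]_n * 'rV['F_p]_n -> Prop)
  (hSsub : is_subspace S) (hSiso : totally_isotropic S)
  (hSneg : simult_negacyclic S)
  (hSideal : is_nc_ideal
     (fun h : {poly L} => forall i, h`_i \in <<1%VS; eta>>%VS)
     (fun v : 'rV[L]_n => exists a b, S (a, b) /\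
        v = map_mx (in_alg L) a + eta *: map_mx (in_alg L) b))
  (g : {poly 'F_p}) (hgmon : g \is monic) (hgdvd : g %| 'X^n + 1)
  (hgen : forall a : 'rV['F_p]_n,
     (exists b, S (a, b)) <-> exists h : {poly 'F_p}, vpoly a = (h * g) %% ('X^n + 1))
  (hgeven : g \Po (- 'X) = g) :
  uniquely_negacyclic S g.
Proof.
case: hSsub => hS0 hSadd hSsc.
set P := (p ^ t)%N.
have [j hP] : exists j, P = (n.-1 + n * (2 * j))%N.
  exists (((p ^ t + 1) %/ n)./2).
  have e1 := divnK hdvd.
  have e2 := odd_double_half ((p ^ t + 1) %/ n).
  rewrite hq in e2.
  move: e1 e2; rewrite /P; move: ((p ^ t + 1) %/ n)%N => m.
  rewrite -muln2; move: (m./2) => k. nia.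
have neven : ~~ odd n.
  apply/negP => hodd.
  have e1 := divnK hdvd.
  have : odd (p ^ t + 1) by rewrite -e1 oddM hq hodd.
  by rewrite oddD oddX hpodd orbT.
have hn0 : (n%:R != 0 :> 'F_p).
  rewrite -(dvdn_pcharf (pchar_Fp hp)); apply/negP => hpn.
  have h1 : (p %| p ^ t + 1)%N := dvdn_trans hpn hdvd.
  have h2 : (p %| p ^ t)%N by rewrite dvdn_exp.
  rewrite (dvdn_addr 1 h2) dvdn1 in h1.
  by move: (prime_gt1 hp); rewrite (eqP h1).
have hsep := sep_u hn hn0.
have key : forall d, S (0, d) -> d = 0.
  move=> d hd.
  have [b hb] : exists b, S (d, b).
    case: hSideal => _ _ Imul.
    set v := eta *: map_mx (in_alg L) d.
    have Iv : exists a b, S (a, b) /\ v = map_mx (in_alg L) a + eta *: map_mx (in_alg L) b.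
      by exists 0, d; split => //; rewrite map_mx0 add0r.
    have Ceta : forall i, (eta%:P)`_i \in <<1%VS; eta>>%VS.
      by move=> i; rewrite coefC; case: (i == 0%N); [exact: memv_adjoin | exact: mem0v].
    have [a [b [hab E]]] := Imul _ _ Ceta Iv.
    have E2 : eta ^+ 2 *: map_mx (in_alg L) d = map_mx (in_alg L) a + eta *: map_mx (in_alg L) b.
      by rewrite -E /v vpolyZ // mul_polyC scalerA pvecZ pvec_vpoly // -expr2.
    have noroot : forall c : 'F_p, ~~ root q c.
      move=> c; apply/negP => hc.
      have := hqirr.2 ('X - c%:P); rewrite size_XsubC dvdp_XsubCl => /(_ isT hc).
      by move/eqp_size; rewrite size_XsubC hqsz.
    have R0 : (in_alg L) q`_0 + (in_alg L) q`_1 * eta + (in_alg L) q`_2 * eta ^+ 2 = 0.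
      move: heta; rewrite /root horner_coef size_map_poly hqsz.
      rewrite !big_ord_recr big_ord0 /= !coef_map /= add0r expr0 mulr1 expr1 => /eqP.
      done.
    have indep : forall x y : 'F_p, (in_alg L) x + eta * (in_alg L) y = 0 -> x = 0.
      move=> x y hxy.
      have y0 : y = 0.
        apply/eqP; apply: contraT => hy.
        have ety : eta = (in_alg L) (- x / y).
          rewrite rmorphM rmorphN fmorphV /=.
          have fy : (in_alg L) y != 0 by rewrite fmorph_eq0.
          apply: (mulIf fy); rewrite divfK //.
          by apply/eqP; rewrite -addr_eq0 addrC hxy.
        move: heta; rewrite ety /root horner_map fmorph_eq0 => hr.
        by move: (noroot (- x / y)); rewrite /root hr.
      by move: hxy; rewrite y0 rmorph0 mulr0 addr0 => /eqP; rewrite fmorph_eq0 => /eqP.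
    have q00 : q`_0 != 0.
      by move: (noroot 0); rewrite /root horner_coef0.
    have ea : d = (- q`_2 / q`_0) *: a.
      apply/rowP => i; rewrite mxE.
      have Ei := congr1 (fun M : 'M[L]_(1, n) => M 0 i) E2.
      rewrite /= !mxE in Ei.
      have := indep (q`_2 * a 0 i + q`_0 * d 0 i) (q`_2 * b 0 i + q`_1 * d 0 i).
      have hz : (in_alg L) (q`_2 * a 0 i + q`_0 * d 0 i) + eta * (in_alg L) (q`_2 * b 0 i + q`_1 * d 0 i) = 0.
        rewrite !rmorphD !rmorphM /=.
        have -> : (in_alg L) q`_2 * (in_alg L) (a 0 i) + (in_alg L) q`_0 * (in_alg L) (d 0 i) + eta * ((in_alg L) q`_2 * (in_alg L) (b 0 i) + (in_alg L) q`_1 * (in_alg L) (d 0 i))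
           = (in_alg L) q`_2 * ((in_alg L) (a 0 i) + eta * (in_alg L) (b 0 i)) + (in_alg L) (d 0 i) * ((in_alg L) q`_0 + (in_alg L) q`_1 * eta) by ring.
        rewrite -Ei.
        have -> : (in_alg L) q`_2 * (eta ^+ 2 * (in_alg L) (d 0 i)) + (in_alg L) (d 0 i) * ((in_alg L) q`_0 + (in_alg L) q`_1 * eta)
           = (in_alg L) (d 0 i) * ((in_alg L) q`_0 + (in_alg L) q`_1 * eta + (in_alg L) q`_2 * eta ^+ 2) by ring.
        by rewrite R0 mulr0.
      move=> /(_ hz) /eqP; rewrite addr_eq0 => /eqP hh.
      apply: (mulfI q00); rewrite (_ : q`_0 * d 0 i = - (q`_2 * a 0 i)); last by rewrite hh opprK.
      by field.
    exists ((- q`_2 / q`_0) *: b); rewrite ea.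
    exact: (hSsc _ (a, b) hab).
  have [h hh] := (hgen d).1 (ex_intro _ b hb).
  have orth : forall k, (k < n)%N -> (('X^k * (g * revp d)) %% ('X^n + 1))`_n.-1 = 0.
    move=> k _; rewrite mulrA -dot_poly //.
    have [b' hb'] : exists b', S (pvec n ('X^k * g), b').
      by apply/(hgen _).2; exists 'X^k; rewrite vpoly_pvec.
    have := hSiso _ _ hb' hd; rewrite /symp /=.
    have -> : dotv b' 0 = 0 by rewrite /dotv big1 // => i _; rewrite mxE mulr0.
    by rewrite subr0.
  have h1 : 'X^n + 1 %| g * revp d := dvdu_coef hn orth.
  set D := vpoly d.
  set Dt := D \Po (- 'X).
  have hXP : ('X^n + 1 : {poly 'F_p}) %| 'X^(n.-1) - 'X^P.
    rewrite hP exprD -{1}(mulr1 'X^(n.-1)) -mulrBr dvdp_mull //.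
    rewrite mulnA !exprM -opprB dvdpNr.
    have -> : ('X^n ^+ 2) ^+ j - 1 = ('X^n ^+ 2) ^+ j - 1 ^+ j :> {poly 'F_p} by rewrite expr1n.
    by rewrite subrXX subr_sqr_1 dvdp_mulr // dvdp_mull.
  have h2 : 'X^n + 1 %| revp d - 'X^(n.-1) * Dt ^+ P.
    have e : D \Po (- 'X^(n.-1)) = Dt \Po 'X^(n.-1).
      by rewrite /Dt -comp_polyA raddfN /= comp_polyX.
    have -> : revp d - 'X^(n.-1) * Dt ^+ P = (revp d - 'X^(n.-1) * (D \Po (- 'X^(n.-1))))
        + 'X^(n.-1) * ((Dt \Po 'X^(n.-1)) - (Dt \Po 'X^P)).
      by rewrite /P frob // -e; ring.
    by rewrite dvdp_add ?rev_cong // dvdp_mull // comp_cong.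
  have h3 : 'X^n + 1 %| g * Dt ^+ P.
    have : 'X^n + 1 %| 'X^(n.-1) * (g * Dt ^+ P).
      have -> : 'X^(n.-1) * (g * Dt ^+ P) = g * revp d - g * (revp d - 'X^(n.-1) * Dt ^+ P) by ring.
      by rewrite dvdp_sub // dvdp_mull.
    rewrite Gauss_dvdpr // coprimep_expr // coprimepX rootE !hornerE expr0n.
    by rewrite eqn0Ngt hn add0r oner_eq0.
  have h5 : 'X^n + 1 %| Dt - (h \Po (- 'X)) * g.
    have -> : (h \Po (- 'X)) * g = (h * g) \Po (- 'X) by rewrite comp_polyM hgeven.
    rewrite /Dt -raddfB /= dvdu_negX // /D hh.
    exact: dvdu_modB.
  have h6 : 'X^n + 1 %| Dt ^+ P.+1.
    have -> : Dt ^+ P.+1 = (Dt - (h \Po (- 'X)) * g) * Dt ^+ P + (h \Po (- 'X)) * (g * Dt ^+ P).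
      by rewrite exprS; ring.
    by apply: dvdp_add; [apply: dvdp_mulr | apply: dvdp_mull].
  have h7 : 'X^n + 1 %| D.
    by rewrite -[D](negX_inv) dvdu_negX // (reducedk hn hsep h6).
  have D0 : D = 0.
    by rewrite -(modp_small (p := D) (q := 'X^n + 1)) ?(modp_eq0 h7) // size_u // ltnS size_vpoly.
  by rewrite -(pvec_vpoly hn d) -/D D0 pvec0.
have [b hb] : exists b, S (pvec n g, b).
  by apply/(hgen _).2; exists 1; rewrite vpoly_pvec // mul1r.
exists b; split => // f hf.
apply/eqP; rewrite -subr_eq0; apply/eqP; apply: key.
have := hSadd _ _ hb (hSsc (-1) _ hf); rewrite /= !scaleN1r addrN.
done.
Qed.
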